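(* Let $Y$ be a sofic shift and let $(G,L_G)$ be a right-resolving and regular labeled graph presenting $Y$. Then there is a labeled-graph homomorphism $\theta : (G,L_G) \to (\mathbb K(Y), L_{\mathbb K(Y)})$ such that the induced sliding block code satisfies $\theta(\mathcal R(L_G)) \subseteq \mathcal R(L_{\mathbb K(Y)})$, and $\theta(V_G)$ is a hereditary subset of $V_{\mathbb K(Y)}$. If furthermore $(G,L_G)$ is follower-separated, then $\theta$ is an isomorphism of labeled graphs from $(G,L_G)$ onto the hereditary labeled subgraph $(\mathbb K(Y)_{\theta(V_G)}, L_{\mathbb K(Y)})$.
   Context: A labeled graph $(G,L_G)$: finite directed graph $G$ (vertices $V_G$, edges $E_G$, source/terminal maps $s_G,t_G$), without sinks or sources, with labeling $L_G:E_G\to A$, $A$ a finite alphabet; $X_G$ is its edge shift; $L_G$ acts coordinatewise on paths; it presents $Y=L_G(X_G)$. $X_G[0,\infty)$ denotes right-infinite paths, $X_G(-\infty,-1]$ left-infinite paths $\cdots e_{-2}e_{-1}$; $s_G$ of a right-infinite path is the source of its first edge, $t_G$ of a left-infinite path is the terminal vertex of its last edge; $Y[0,\infty)=\{y_{[0,\infty)}:y\in Y\}$. Right-resolving: distinct edges with the same source have distinct labels. Follower set of a vertex: $f_G(v)=\{L_G(x):x\in X_G[0,\infty), s_G(x)=v\}$. For $y\in Y$: $F(y)=\{w\in Y[0,\infty): y_{(-\infty,-1]}w\in Y\}$. A vertex $v$ is regular if there is $z\in X_G$ with $t_G(z_{(-\infty,-1]})=v$ and $f_G(v)=F(L_G(z))$;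 the labeled graph is regular if all vertices are regular. Follower-separated: $f_G(v)=f_G(w)$ implies $v=w$. For a sliding block code $\pi:X\to Y$ and $x\in X$ let $\mathbb U(x)=\{z\in X: \exists N\ \forall i\le N,\ z_i=x_i\}$; $x$ is regular for $\pi$ if $\pi$ maps $\mathbb U(x)$ onto $\mathbb U(\pi(x))$; $\mathcal R(\pi)$ is the set of such points. Future cover $(\mathbb K(Y),L_{\mathbb K(Y)})$ of a sofic shift $Y\subseteq A^{\mathbb Z}$: vertices are the distinct sets $F(y)$, $y\in Y$ (finitely many); there is an edge labeled $a\in A$ from $F(y)$ to $F(z)$ exactly when $F(z)=\{w\in A^{\mathbb N}: aw\in F(y)\}$ (one such edge for each such pair and label). A labeled-graph homomorphism is a graph homomorphism (vertices to vertices, edges to edges, compatible with sources and terminals) preserving labels; it induces a sliding block code between the edge shifts. A set $U$ of vertices is hereditary if $s(e)\in U$ implies $t(e)\in U$ for every edge $e$; the hereditary labeled subgraph on $U$ has vertex set $U$ and all edges with source in $U$, with the restricted labeling. *)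

(* Defs.v *)
From mathcomp Require Import all_boot.
From Stdlib Require Import ZArith.

Set Implicit Arguments.
Unset Strict Implicit.
Unset Printing Implicit Defensive.

Definition setEq {T : Type} (P Q : T -> Prop) : Prop := forall t, P t <-> Q t.

(* A labeled graph is given by vertex type V, edge type E, source/terminal
   maps src, tgt : E -> V and labeling lab : E -> A. *)

Definition bipath {V E : Type} (src tgt : E -> V) (x : Z -> E) : Prop :=
  forall i : Z, tgt (x i) = src (x (i + 1)%Z).

Definition rpath {V E : Type} (src tgt : E -> V) (x : nat -> E) : Prop :=
  forall n : nat, tgt (x n) = src (x n.+1).

Definition labcode {E A : Type} (lab : E -> A) (x : Z -> E) : Z -> A :=
  fun i => lab (x i).

Definition presented {V E A : Type} (src tgt : E -> V) (lab : E -> A)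
  (y : Z -> A) : Prop :=
  exists x, bipath src tgt x /\ forall i, y i = lab (x i).

Definition essential {V E : Type} (src tgt : E -> V) : Prop :=
  forall v : V, (exists e, src e = v) /\ (exists e, tgt e = v).

Definition right_resolving {V E A : Type} (src : E -> V) (lab : E -> A) : Prop :=
  forall e e' : E, src e = src e' -> lab e = lab e' -> e = e'.

Definition right_rays {A : Type} (Y : (Z -> A) -> Prop) (w : nat -> A) : Prop :=
  exists y, Y y /\ forall n : nat, y (Z.of_nat n) = w n.

Definition concat {A : Type} (y : Z -> A) (w : nat -> A) : Z -> A :=
  fun i => if (i <? 0)%Z then y i else w (Z.to_nat i).

Definition follower_set {A : Type} (Y : (Z -> A) -> Prop) (y : Z -> A)
  : (nat -> A) -> Prop :=
  fun w => right_rays Y w /\ Y (concat y w).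

Definition vfollower {V E A : Type} (src tgt : E -> V) (lab : E -> A) (v : V)
  : (nat -> A) -> Prop :=
  fun w => exists x, rpath src tgt x /\ src (x 0%N) = v /\
                     forall n, w n = lab (x n).

Definition regular_vertex {V E A : Type} (src tgt : E -> V) (lab : E -> A)
  (v : V) : Prop :=
  exists z, bipath src tgt z /\ tgt (z (-1)%Z) = v /\
    setEq (vfollower src tgt lab v)
          (follower_set (presented src tgt lab) (labcode lab z)).

Definition regular_graph {V E A : Type} (src tgt : E -> V) (lab : E -> A) : Prop :=
  forall v : V, regular_vertex src tgt lab v.

Definition follower_separated {V E A : Type} (src tgt : E -> V) (lab : E -> A)
  : Prop :=
  forall v w : V, setEq (vfollower src tgt lab v) (vfollower src tgt lab w) ->
    v = w.

Definition Uset {S : Type} (X : (Z -> S) -> Prop) (x z : Z -> S) : Prop :=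
  X z /\ exists N : Z, forall i : Z, (i <= N)%Z -> z i = x i.

Definition image_shift {S T : Type} (X : (Z -> S) -> Prop)
  (pi : (Z -> S) -> (Z -> T)) (y : Z -> T) : Prop :=
  exists x, X x /\ forall i, y i = pi x i.

Definition regular_point {S T : Type} (X : (Z -> S) -> Prop)
  (pi : (Z -> S) -> (Z -> T)) (x : Z -> S) : Prop :=
  X x /\
  (forall z, Uset X x z -> Uset (image_shift X pi) (pi x) (pi z)) /\
  (forall y, Uset (image_shift X pi) (pi x) y ->
     exists z, Uset X x z /\ forall i, pi z i = y i).

Definition KV {A : Type} (Y : (Z -> A) -> Prop) : Type :=
  {P : (nat -> A) -> Prop | exists y, Y y /\ P = follower_set Y y}.

Definition shiftcons {A : Type} (a : A) (w : nat -> A) : nat -> A :=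
  fun n => match n with 0 => a | m.+1 => w m end.

Definition KE {A : Type} (Y : (Z -> A) -> Prop) : Type :=
  {t : KV Y * A * KV Y |
     setEq (proj1_sig t.2) (fun w => proj1_sig t.1.1 (shiftcons t.1.2 w))}.

Definition Ksrc {A : Type} (Y : (Z -> A) -> Prop) (e : KE Y) : KV Y :=
  (proj1_sig e).1.1.
Definition Ktgt {A : Type} (Y : (Z -> A) -> Prop) (e : KE Y) : KV Y :=
  (proj1_sig e).2.
Definition Klab {A : Type} (Y : (Z -> A) -> Prop) (e : KE Y) : A :=
  (proj1_sig e).1.2.

Definition lg_hom {V E V' E' A : Type}
  (src tgt : E -> V) (lab : E -> A) (src' tgt' : E' -> V') (lab' : E' -> A)
  (thV : V -> V') (thE : E -> E') : Prop :=
  forall e : E, src' (thE e) = thV (src e) /\ tgt' (thE e) = thV (tgt e) /\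
                lab' (thE e) = lab e.

Definition hereditary {V E : Type} (src tgt : E -> V) (U : V -> Prop) : Prop :=
  forall e : E, U (src e) -> U (tgt e).

(* theta is an isomorphism of labeled graphs from G onto the hereditary
   labeled subgraph of G' on theta(V): bijective onto theta(V) on vertices,
   and bijective onto the edges of G' with source in theta(V). Compatibility
   with sources, terminals and labels is given by lg_hom. *)
Definition iso_onto_image_subgraph {V E V' E' : Type} (src' : E' -> V')
  (thV : V -> V') (thE : E -> E') : Prop :=
  injective thV /\ injective thE /\
  (forall e' : E', (exists v, thV v = src' e') -> exists e, thE e = e').

(* Main.v *)
Require Import Defs.
From mathcomp Require Import all_boot zify.
From Stdlib Require Import ZArith Lia Classical ClassicalEpsilon FunctionalExtensionality PropExtensionality ProofIrrelevance.
Open Scope Z_scope.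

Definition chain {V : Type} (R : Z -> V -> V -> Prop) (a b : Z) (c : Z -> V) :=
  forall i, a <= i < b -> R i (c i) (c (i+1)).

Lemma chain_sub {V : Type} (R : Z -> V -> V -> Prop) a b a' b' c :
  chain R a b c -> a <= a' -> b' <= b -> chain R a' b' c.
Proof. intros H H1 H2 i Hi. apply H. lia. Qed.

Lemma pigeon_seq {V : eqType} (Q : V -> nat -> Prop) :
  (forall v k k', (k' <= k)%coq_nat -> Q v k -> Q v k') ->
  (forall v, exists k, ~ Q v k) ->
  forall s : seq V, exists K, forall v, v \in s -> ~ Q v K.
Proof.
intros Hm Hn s. induction s as [|a s IH].
- exists 0%nat. intros v Hv. by rewrite in_nil in Hv.
- destruct IH as [K HK]. destruct (Hn a) as [k Hk].
  exists (Nat.max K k). intros v Hv. rewrite in_cons in Hv.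
  case/orP: Hv => [/eqP -> | Hv] HQ.
  + apply Hk. apply (Hm a (Nat.max K k)); [lia|exact HQ].
  + apply (HK v Hv). apply (Hm v (Nat.max K k)); [lia|exact HQ].
Qed.

Lemma pigeon (V : finType) (Q : V -> nat -> Prop) :
  (forall v k k', (k' <= k)%coq_nat -> Q v k -> Q v k') ->
  (forall k, exists v, Q v k) -> exists v, forall k, Q v k.
Proof.
intros Hm Hk. apply NNPP. intro Hno.
have Hn : forall v, exists k, ~ Q v k.
{ intro v. apply NNPP. intro H. apply Hno. exists v. intro k.
  apply NNPP. intro H'. apply H. by exists k. }
destruct (pigeon_seq Q Hm Hn (enum V)) as [K HK].
destruct (Hk K) as [v Hv]. apply (HK v); [by rewrite mem_enum | exact Hv].
Qed.

Definition goodF {V : Type} (R : Z -> V -> V -> Prop) i v :=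
  forall n : nat, exists c, c i = v /\ chain R i (i + Z.of_nat n) c.
Definition goodB {V : Type} (R : Z -> V -> V -> Prop) i v :=
  forall m : nat, exists c, c i = v /\ chain R (i - Z.of_nat m) i c.

Lemma stepF {V : finType} {R i} {v : V} : goodF R i v -> goodB R i v ->
  exists v', R i v v' /\ goodF R (i+1) v' /\ goodB R (i+1) v'.
Proof.
intros HF HB.
destruct (@pigeon V (fun v' k => R i v v' /\ exists c, c (i+1) = v' /\
            chain R (i+1) (i+1+Z.of_nat k) c)) as [v' Hv'].
- intros w k k' Hk [HR [c [Hc Hch]]]. split; [exact HR|]. exists c. split; [exact Hc|].
  eapply chain_sub; [exact Hch| lia | lia].
- intro k. destruct (HF (S k)) as [c [Hc Hch]]. exists (c (i+1)). split.
  + rewrite <- Hc. apply Hch. lia.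
  + exists c. split; [reflexivity|]. eapply chain_sub; [exact Hch| lia | lia].
- exists v'. destruct (Hv' 0%nat) as [HR _]. split; [exact HR|]. split.
  + intro n. destruct (Hv' n) as [_ [c [Hc Hch]]]. exists c. split; assumption.
  + intro m. destruct (HB m) as [c [Hc Hch]].
    exists (fun j => if j =? i+1 then v' else c j). split.
    * by rewrite Z.eqb_refl.
    * intros j Hj. destruct (Z.eq_dec j i) as [->|Hji].
      { rewrite Z.eqb_refl. replace (i =? i+1) with false by (symmetry; apply Z.eqb_neq; lia).
        rewrite Hc. exact HR. }
      replace (j =? i+1) with false by (symmetry; apply Z.eqb_neq; lia).
      replace (j+1 =? i+1) with false by (symmetry; apply Z.eqb_neq; lia).
      apply Hch. lia.
Qed.

Lemma stepB {V : finType} {R i} {v : V} : goodF R i v -> goodB R i v ->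
  exists v', R (i-1) v' v /\ goodF R (i-1) v' /\ goodB R (i-1) v'.
Proof.
intros HF HB.
destruct (@pigeon V (fun v' k => R (i-1) v' v /\ exists c, c (i-1) = v' /\
            chain R (i-1-Z.of_nat k) (i-1) c)) as [v' Hv'].
- intros w k k' Hk [HR [c [Hc Hch]]]. split; [exact HR|]. exists c. split; [exact Hc|].
  eapply chain_sub; [exact Hch| lia | lia].
- intro k. destruct (HB (S k)) as [c [Hc Hch]]. exists (c (i-1)). split.
  + have H' := Hch (i-1) ltac:(lia). replace (i-1+1) with i in H' by lia. rewrite <- Hc. exact H'.
  + exists c. split; [reflexivity|]. eapply chain_sub; [exact Hch| lia | lia].
- exists v'. destruct (Hv' 0%nat) as [HR _]. split; [exact HR|]. split.
  + intro n. destruct (HF n) as [c [Hc Hch]].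
    exists (fun j => if j =? i-1 then v' else c j). split.
    * by rewrite Z.eqb_refl.
    * intros j Hj. destruct (Z.eq_dec j (i-1)) as [->|Hji].
      { rewrite Z.eqb_refl. replace (i-1+1 =? i-1) with false by (symmetry; apply Z.eqb_neq; lia).
        replace (i-1+1) with i by lia. rewrite Hc. exact HR. }
      replace (j =? i-1) with false by (symmetry; apply Z.eqb_neq; lia).
      replace (j+1 =? i-1) with false by (symmetry; apply Z.eqb_neq; lia).
      apply Hch. lia.
  + intro m. destruct (Hv' m) as [_ [c [Hc Hch]]]. exists c. split; assumption.
Qed.

Lemma koenig (V : finType) (R : Z -> V -> V -> Prop) :
  (forall m n : nat, exists c, chain R (- Z.of_nat m) (Z.of_nat n) c) ->
  exists c : Z -> V, forall i, R i (c i) (c (i+1)).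
Proof.
intro H.
destruct (@pigeon V (fun v k => exists c, c 0 = v /\ chain R (- Z.of_nat k) (Z.of_nat k) c))
  as [v0 Hv0].
- intros w k k' Hk [c [Hc Hch]]. exists c. split; [exact Hc|].
  eapply chain_sub; [exact Hch| lia | lia].
- intro k. destruct (H k k) as [c Hc]. exists (c 0). by exists c.
- have G0F : goodF R 0 v0.
  { intro n. destruct (Hv0 n) as [c [Hc Hch]]. exists c. split; [exact Hc|].
    eapply chain_sub; [exact Hch| lia | lia]. }
  have G0B : goodB R 0 v0.
  { intro m. destruct (Hv0 m) as [c [Hc Hch]]. exists c. split; [exact Hc|].
    eapply chain_sub; [exact Hch| lia | lia]. }
  pose nF := fun i v => epsilon (inhabits v)
     (fun v' => R i v v' /\ goodF R (i+1) v' /\ goodB R (i+1) v').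
  pose nB := fun i v => epsilon (inhabits v)
     (fun v' => R (i-1) v' v /\ goodF R (i-1) v' /\ goodB R (i-1) v').
  have nFs : forall i v, goodF R i v -> goodB R i v ->
     R i v (nF i v) /\ goodF R (i+1) (nF i v) /\ goodB R (i+1) (nF i v).
  { intros i v H1 H2. apply (epsilon_spec (inhabits v) _ (stepF H1 H2)). }
  have nBs : forall i v, goodF R i v -> goodB R i v ->
     R (i-1) (nB i v) v /\ goodF R (i-1) (nB i v) /\ goodB R (i-1) (nB i v).
  { intros i v H1 H2. apply (epsilon_spec (inhabits v) _ (stepB H1 H2)). }
  clearbody nF nB.
  pose fw := fix fw (k : nat) : V := match k with O => v0 | S k' => nF (Z.of_nat k') (fw k') end.
  pose bw := fix bw (k : nat) : V := match k with O => v0 | S k' => nB (- Z.of_nat k') (bw k') end.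
  have HF : forall k, goodF R (Z.of_nat k) (fw k) /\ goodB R (Z.of_nat k) (fw k)
     /\ R (Z.of_nat k) (fw k) (fw (S k)).
  { induction k as [|k [IH1 [IH2 _]]].
    - split; [exact G0F|]. split; [exact G0B|]. apply (nFs _ _ G0F G0B).
    - destruct (nFs _ _ IH1 IH2) as [_ [H1 H2]].
      have E : Z.of_nat (S k) = Z.of_nat k + 1 by lia.
      rewrite <- E in H1, H2. split; [exact H1|]. split; [exact H2|].
      apply (nFs _ _ H1 H2). }
  have HB : forall k, goodF R (- Z.of_nat k) (bw k) /\ goodB R (- Z.of_nat k) (bw k)
     /\ R (- Z.of_nat k - 1) (bw (S k)) (bw k).
  { induction k as [|k [IH1 [IH2 _]]].
    - split; [exact G0F|]. split; [exact G0B|]. apply (nBs _ _ G0F G0B).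
    - destruct (nBs _ _ IH1 IH2) as [_ [H1 H2]].
      have E : - Z.of_nat (S k) = - Z.of_nat k - 1 by lia.
      rewrite <- E in H1, H2.
      split; [exact H1|]. split; [exact H2|].
      apply (nBs _ _ H1 H2). }
  exists (fun i => if 0 <=? i then fw (Z.to_nat i) else bw (Z.to_nat (- i))).
  intro i. destruct (Z_le_dec 0 i) as [Hi|Hi].
  + replace (0 <=? i) with true by (symmetry; apply Z.leb_le; lia).
    replace (0 <=? i+1) with true by (symmetry; apply Z.leb_le; lia).
    replace (Z.to_nat (i+1)) with (S (Z.to_nat i)) by lia.
    destruct (HF (Z.to_nat i)) as [_ [_ H3]]. rewrite Z2Nat.id in H3; [exact H3|lia].
  + replace (0 <=? i) with false by (symmetry; apply Z.leb_gt; lia).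
    set k := Z.to_nat (- (i+1)).
    replace (Z.to_nat (- i)) with (S k) by lia.
    destruct (HB k) as [_ [_ H3]].
    replace i with (- Z.of_nat k - 1) by lia.
    replace (- Z.of_nat k - 1 + 1) with (- Z.of_nat k) by lia.
    destruct k as [|k'].
    * simpl. exact H3.
    * replace (0 <=? - Z.of_nat (S k')) with false by (symmetry; apply Z.leb_gt; lia).
      replace (Z.to_nat (- - Z.of_nat (S k'))) with (S k') by lia. exact H3.
Qed.

Lemma KV_eq {A : Type} (Y : (Z -> A) -> Prop) (u u' : KV Y) :
  proj1_sig u = proj1_sig u' -> u = u'.
Proof. destruct u as [p hp], u' as [p' hp']; simpl; intros ->. f_equal. apply proof_irrelevance. Qed.

Lemma KE_eq {A : Type} (Y : (Z -> A) -> Prop) (u u' : KE Y) :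
  proj1_sig u = proj1_sig u' -> u = u'.
Proof. destruct u as [p hp], u' as [p' hp']; simpl; intros ->. f_equal. apply proof_irrelevance. Qed.

Lemma KV_nonempty {V E A : Type} (src tgt : E -> V) (lab : E -> A)
  (u : KV (presented src tgt lab)) : exists w, proj1_sig u w.
Proof.
destruct u as [P [y [Hy ->]]]. simpl. exists (fun n => y (Z.of_nat n)). split.
- exists y. split; [exact Hy| reflexivity].
- destruct Hy as [x [Hx Hxy]]. exists x. split; [exact Hx|]. intro i. unfold concat.
  destruct (i <? 0) eqn:Hi; [apply Hxy|]. rewrite Z2Nat.id; [apply Hxy|].
  apply Z.ltb_ge in Hi. exact Hi.
Qed.

Lemma K_iter {A : Type} (Y : (Z -> A) -> Prop) (z0 : Z -> KE Y) :
  bipath (@Ksrc A Y) (@Ktgt A Y) z0 ->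
  forall (k : nat) i w, proj1_sig (Ksrc (z0 (i + Z.of_nat k))) w ->
  proj1_sig (Ksrc (z0 i)) (fun j => if (j < k)%nat then Klab (z0 (i + Z.of_nat j)) else w (j - k)%nat).
Proof.
intros Hz k. induction k as [|k IH]; intros i w Hw.
- rewrite Z.add_0_r in Hw.
  replace (fun j : nat => if (j < 0)%nat then Klab (z0 (i + Z.of_nat j)) else w (j - 0)%nat) with w.
  + exact Hw.
  + apply functional_extensionality => j. by rewrite ltn0 subn0.
- replace (i + Z.of_nat k.+1) with (i + 1 + Z.of_nat k) in Hw by lia.
  have H1 := IH _ _ Hw. rewrite <- Hz in H1.
  have H2 := proj1 (proj2_sig (z0 i) _) H1.
  replace (fun j : nat => if (j < k.+1)%nat then Klab (z0 (i + Z.of_nat j)) else w (j - k.+1)%nat)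
    with (shiftcons (proj1_sig (z0 i)).1.2
          (fun j : nat => if (j < k)%nat then Klab (z0 (i + 1 + Z.of_nat j)) else w (j - k)%nat)).
  + exact H2.
  + apply functional_extensionality => j. destruct j as [|j].
    * simpl. by rewrite Z.add_0_r.
    * simpl. rewrite ltnS subSS. replace (i + 1 + Z.of_nat j) with (i + Z.of_nat j.+1) by lia.
      reflexivity.
Qed.

Lemma Kpath_presented {V E A : finType} (src tgt : E -> V) (lab : E -> A)
  (z0 : Z -> KE (presented src tgt lab)) :
  bipath (@Ksrc A _) (@Ktgt A _) z0 ->
  presented src tgt lab (labcode (@Klab A _) z0).
Proof.
intro Hz.
destruct (@koenig V (fun i v v' => exists e, src e = v /\ tgt e = v' /\ lab e = Klab (z0 i)))
  as [c Hc].
- intros m n. destruct (KV_nonempty src tgt lab (Ksrc (z0 (Z.of_nat n)))) as [w Hw].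
  have Hw' : proj1_sig (Ksrc (z0 (- Z.of_nat m + Z.of_nat (m + n)))) w.
  { replace (- Z.of_nat m + Z.of_nat (m + n)) with (Z.of_nat n) by lia. exact Hw. }
  have H := K_iter _ z0 Hz _ _ _ Hw'.
  destruct (proj2_sig (Ksrc (z0 (- Z.of_nat m)))) as [y0 [_ Hy0]].
  rewrite Hy0 in H. destruct H as [[y [[x [Hx Hxy]] Hyw]] _].
  exists (fun j => src (x (j + Z.of_nat m))). intros j Hj.
  exists (x (j + Z.of_nat m)). split; [reflexivity|]. split.
  + rewrite Hx. f_equal. f_equal. lia.
  + rewrite <- Hxy. replace (j + Z.of_nat m) with (Z.of_nat (Z.to_nat (j + Z.of_nat m))) by lia.
    rewrite Hyw. have Hlt : (Z.to_nat (j + Z.of_nat m) < m + n)%nat by (apply/ltP; lia).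
    rewrite Hlt. f_equal. f_equal. lia.
- have He : forall i, {e | src e = c i /\ tgt e = c (i+1) /\ lab e = Klab (z0 i)}.
  { intro i. apply constructive_indefinite_description. apply Hc. }
  exists (fun i => proj1_sig (He i)). split.
  + intro i. destruct (proj2_sig (He i)) as [_ [-> _]].
    destruct (proj2_sig (He (i+1))) as [-> _]. reflexivity.
  + intro i. destruct (proj2_sig (He i)) as [_ [_ ->]]. reflexivity.
Qed.
Close Scope Z_scope.

Lemma vf_edge {V E A : Type} (src tgt : E -> V) (lab : E -> A) :
  right_resolving src lab -> forall e,
  setEq (vfollower src tgt lab (tgt e)) (fun w => vfollower src tgt lab (src e) (shiftcons (lab e) w)).
Proof.
intros RR e w. split.
- intros [p [Hp [H0 Hl]]]. exists (shiftcons e p). split; [|split].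
  + intros [|n]; simpl; [by rewrite H0|apply Hp].
  + reflexivity.
  + intros [|n]; simpl; [reflexivity|apply Hl].
- intros [p [Hp [H0 Hl]]]. have E0 : p 0%nat = e.
  { apply RR; [exact H0| symmetry; exact (Hl 0%nat)]. }
  exists (fun n => p n.+1). split; [|split].
  + intro n. apply Hp.
  + rewrite <- Hp. by rewrite E0.
  + intro n. exact (Hl n.+1).
Qed.

Theorem proposition3p1 (A V E : finType) (src tgt : E -> V) (lab : E -> A)
  (Y : (Z -> A) -> Prop) :
  essential src tgt ->
  setEq Y (presented src tgt lab) ->
  right_resolving src lab ->
  regular_graph src tgt lab ->
  exists (thV : V -> KV Y) (thE : E -> KE Y),
    lg_hom src tgt lab (@Ksrc A Y) (@Ktgt A Y) (@Klab A Y) thV thE /\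
    (forall x : Z -> E,
        regular_point (bipath src tgt) (labcode lab) x ->
        regular_point (bipath (@Ksrc A Y) (@Ktgt A Y)) (labcode (@Klab A Y))
                      (fun i => thE (x i))) /\
    hereditary (@Ksrc A Y) (@Ktgt A Y) (fun u => exists v, thV v = u) /\
    (follower_separated src tgt lab ->
       iso_onto_image_subgraph (@Ksrc A Y) thV thE).
Proof.
intros Hess HY RR Hreg.
have EY : Y = presented src tgt lab.
{ apply functional_extensionality => y. apply propositional_extensionality. apply HY. }
subst Y.
have Hv : forall v, exists y, presented src tgt lab y /\
   vfollower src tgt lab v = follower_set (presented src tgt lab) y.
{ intro v. destruct (Hreg v) as [z [Hz [_ Hs]]]. exists (labcode lab z). split.
  - exists z. by split.
  - apply functional_extensionality => w. apply propositional_extensionality. apply Hs. }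
pose thV := fun v => exist _ (vfollower src tgt lab v) (Hv v) : KV (presented src tgt lab).
pose thE := fun e => exist (fun t : KV (presented src tgt lab) * A * KV (presented src tgt lab) =>
   setEq (proj1_sig t.2) (fun w => proj1_sig t.1.1 (shiftcons t.1.2 w)))
   (thV (src e), lab e, thV (tgt e)) (vf_edge src tgt lab RR e).
have Key : forall (e' : KE (presented src tgt lab)) v, Ksrc e' = thV v ->
   exists e, src e = v /\ lab e = Klab e' /\ thV (tgt e) = Ktgt e'.
{ intros [[[s a] t] Ht] v. unfold Ksrc, Klab, Ktgt. simpl. intro Hs. subst s.
  simpl in Ht.
  destruct (KV_nonempty src tgt lab t) as [w0 Hw0].
  destruct (proj1 (Ht w0) Hw0) as [p [Hp [H0 Hl]]].
  exists (p 0%nat). split; [exact H0|]. split; [symmetry; exact (Hl 0%nat)|].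
  apply KV_eq. simpl. apply functional_extensionality => w. apply propositional_extensionality.
  rewrite (vf_edge src tgt lab RR (p 0%nat) w). rewrite H0 -(Hl 0%nat). simpl.
  symmetry. apply Ht. }
have Hbip : forall z, bipath src tgt z -> bipath (@Ksrc A _) (@Ktgt A _) (fun i => thE (z i)).
{ intros z Hz i. unfold Ksrc, Ktgt. simpl. by rewrite Hz. }
exists thV, thE. split; [|split; [|split]].
- intro e. by split; [|split].
- intros x [Hx [H2 H3]]. split; [exact (Hbip x Hx)|]. split.
  + intros z [Hz [N HN]]. split.
    * exists z. by split.
    * exists N. intros i Hi. unfold labcode. by rewrite HN.
  + intros y [[z0 [Hz0 Hy]] [N HN]].
    destruct (Kpath_presented src tgt lab z0 Hz0) as [x2 [Hx2 Hl2]].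
    destruct (H3 y) as [z [[Hz [N' HN']] Hzy]].
    { split.
      - exists x2. split; [exact Hx2|]. intro i. rewrite Hy. apply Hl2.
      - exists N. intros i Hi. rewrite (HN i Hi). reflexivity. }
    exists (fun i => thE (z i)). split.
    * split; [exact (Hbip z Hz)|]. exists N'. intros i Hi. by rewrite HN'.
    * intro i. rewrite <- Hzy. reflexivity.
- intros e' [v Hv']. destruct (Key e' v (esym Hv')) as [e [_ [_ Ht]]]. by exists (tgt e).
- intro Hsep. split; [|split].
  + intros v w Hvw. apply Hsep. have := f_equal (@proj1_sig _ _) Hvw. simpl. intros ->.
    intro; reflexivity.
  + intros e1 e2 H12. have := f_equal (@proj1_sig _ _) H12. simpl. intro Ht.
    apply RR.
    * apply Hsep. have := f_equal (fun t => proj1_sig t.1.1) Ht. simpl. intros ->.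
      intro; reflexivity.
    * exact (f_equal (fun t => t.1.2) Ht).
  + intros e' [v Hv']. destruct (Key e' v (esym Hv')) as [e [Hs [Hl Ht]]].
    exists e. apply KE_eq. destruct e' as [[[s a] t] Hst]. simpl in *.
    unfold Ksrc, Klab, Ktgt in *. simpl in *. subst. reflexivity.
Qed.
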